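(* Let $\mathbf{X}=(X_n)_{n\ge0}$ be a second-order stationary process with spectral density $f_X$ on $[-\pi,\pi)$ having finitely many, $N_X\ge1$, singular frequencies. Let $k\ge1$ be an integer and $Y_n=X_{kn}$ (deterministic sampling), and let $N_Y$ be the number of singular frequencies of the spectral density $f_Y$ of $\mathbf{Y}$. Then (a) $1\le N_Y\le N_X$; (b) $N_Y<N_X$ if and only if $f_X$ has at least two singular frequencies $\lambda_0\ne\lambda_1$ such that $\lambda_0-\lambda_1=\frac{2\pi j^*}{k}$ for some integer $j^*$.
   Context: A singular frequency of a spectral density $f$ on $[-\pi,\pi)$ is a point $\lambda_0\in[-\pi,\pi)$ at which $f$ is unbounded (i.e. $f$ is unbounded on every neighbourhood of $\lambda_0$). For deterministic sampling with step $k$ the spectral density of $\mathbf{Y}$ is $f_Y(\lambda)=\frac{1}{2\ell+1}\sum_{j=-\ell}^{\ell}f_X\big(\frac{\lambda-2\pi j}{2\ell+1}\big)$ if $k=2\ell+1$, and $f_Y(\lambda)=\frac{1}{2\ell}\Big(\sum_{j=-\ell+1}^{\ell-1}f_X\big(\frac{\lambda-2\pi j}{2\ell}\big)+f_X\big(\frac{\lambda-2\pi\ell\,\mathrm{sgn}(\lambda)}{2\ell}\big)\Big)$ if $k=2\ell$. *)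

(* Defs.v *)
From HB Require Import structures.
From mathcomp Require Import all_boot all_order all_algebra.
From mathcomp Require Import finmap.
From mathcomp Require Import all_classical all_reals all_analysis.
Set Implicit Arguments. Unset Strict Implicit. Unset Printing Implicit Defensive.
Import Order.TTheory GRing.Theory Num.Theory.
Local Open Scope classical_set_scope.
Local Open Scope ring_scope.

Definition singular_freq {R : realType} (f : R -> R) (l0 : R) : Prop :=
  -pi <= l0 < pi /\
  forall (M e : R), 0 < e ->
    exists l : R, [/\ -pi <= l < pi,
      (exists m : int, `|l - l0 + m%:~R * (2 * pi)| < e) & M < f l].

Definition singular_set {R : realType} (f : R -> R) : set R :=
  [set l | singular_freq f l].

(* number of singular frequencies (meaningful when the set is finite) *)
Definition nb_singular {R : realType} (f : R -> R) : nat :=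
  (#|` fset_set (singular_set f) |)%fset.

(* spectral density of Y_n = X_{kn} (deterministic sampling with step k) *)
Definition sampled_density {R : realType} (k : nat) (f : R -> R) (l : R) : R :=
  let ell := k./2 in
  if odd k then
    (k%:R)^-1 * \sum_(0 <= i < k)
        f ((l - 2 * pi * ((i%:Z - ell%:Z)%:~R)) / k%:R)
  else
    (k%:R)^-1 * (\sum_(0 <= i < k.-1)
        f ((l - 2 * pi * ((i%:Z - (ell.-1)%:Z)%:~R)) / k%:R)
      + f ((l - 2 * pi * ell%:R * Num.sg l) / k%:R)).

(* Main.v *)
Require Import Defs.
From HB Require Import structures.
From mathcomp Require Import all_boot all_order all_algebra.
From mathcomp Require Import finmap.
From mathcomp Require Import all_classical all_reals all_analysis.
From mathcomp Require Import ring lra zify.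
Import Order.TTheory GRing.Theory Num.Theory.
Local Open Scope classical_set_scope.
Local Open Scope ring_scope.

Definition rep {R : realType} (z : R) : R :=
  z - (Num.floor ((z + pi) / (2 * pi)))%:~R * (2 * pi).

Lemma rep_range {R : realType} (z : R) : -pi <= rep z < pi.
Proof.
rewrite /rep; have hp : (0 : R) < pi := pi_gt0 R.
have := floor_itv ((z + pi) / (2 * pi)).
set f := Num.floor _; rewrite intrD => /andP[h1 h2].
have e : (z + pi) / (2 * pi) * (2 * pi) = z + pi by field; lra.
nra.
Qed.

Lemma int_small {R : realType} (s : int) : -1 < (s%:~R : R) < 1 -> s = 0.
Proof.
move=> /andP[h1 h2].
have : (-1 < s)%R by rewrite -(ltr_int R) mulrNz.
have : (s < 1)%R by rewrite -(ltr_int R).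
lia.
Qed.

Lemma rep_eq {R : realType} (z : R) : exists t : int, z = rep z + t%:~R * (2 * pi).
Proof. by exists (Num.floor ((z + pi) / (2 * pi))); rewrite /rep subrK. Qed.

Lemma rep_uniq {R : realType} (u z : R) (t : int) :
  -pi <= u < pi -> z = u + t%:~R * (2 * pi) -> rep z = u.
Proof.
move=> hu hz; have hp : (0 : R) < pi := pi_gt0 R.
have [t' ht'] := rep_eq z; have := rep_range z.
have e : rep z - u = (t - t')%:~R * (2 * pi) by rewrite intrB; lra.
move=> hr.
have : -1 < ((t - t')%:~R : R) < 1 by apply/andP; split; nra.
move/int_small => /eqP; rewrite subr_eq0 => /eqP ett.
move: e; rewrite ett subrr mul0r; lra.
Qed.

Lemma arg_range {R : realType} (l c K : R) : 0 < K -> -pi <= l < pi ->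
  2 * c + 1 <= K -> 1 - 2 * c <= K -> -pi <= (l - 2 * pi * c) / K < pi.
Proof.
move=> hK /andP[hl1 hl2] h1 h2; have hp := pi_gt0 R.
by apply/andP; split; [rewrite ler_pdivlMr// | rewrite ltr_pdivrMr//]; nra.
Qed.

Lemma arg_cong {R : realType} (l : R) (k : nat) (z : int) : (0 < k)%N ->
  k%:R * ((l - 2 * pi * z%:~R) / k%:R) = l + (- z)%:~R * (2 * pi).
Proof.
move=> hk; have hK : (k%:R : R) != 0 by rewrite pnatr_eq0 -lt0n.
by rewrite mulrNz; field.
Qed.

Lemma k_odd {R : realType} (k : nat) : odd k -> (k%:R : R) = 2 * (k./2)%:R + 1.
Proof.
move=> ho; rewrite -{1}(odd_double_half k) ho -muln2 natrD natrM /=; ring.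
Qed.

Lemma k_even {R : realType} (k : nat) : ~~ odd k -> (k%:R : R) = 2 * (k./2)%:R.
Proof.
move=> ho; rewrite -{1}(odd_double_half k) (negbTE ho) -muln2 natrD natrM /=; ring.
Qed.

Lemma odd_term {R : realType} (k i : nat) (l : R) : odd k -> (i < k)%N -> -pi <= l < pi ->
  let a := (l - 2 * pi * ((i%:Z - (k./2)%:Z)%:~R)) / k%:R in
  -pi <= a < pi /\ exists j : int, k%:R * a = l + j%:~R * (2 * pi).
Proof.
move=> ho hi hl a; have k0 : (0 < k)%N := leq_ltn_trans (leq0n i) hi.
split; last by eexists; apply: arg_cong.
have hK : (k%:R : R) = _ := k_odd k ho.
have hi' : (i%:R : R) <= 2 * (k./2)%:R.
  have : (i <= (k./2).*2)%N.
    by move: hi; rewrite -{1}(odd_double_half k) ho add1n ltnS.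
  by rewrite -(ler_nat R) -muln2 natrM mulrC.
apply: arg_range => //; first by rewrite ltr0n.
- rewrite intrB; change ((i%:Z)%:~R : R) with (i%:R : R);
  change (((k./2)%:Z)%:~R : R) with ((k./2)%:R : R); lra.
- rewrite intrB; change ((i%:Z)%:~R : R) with (i%:R : R);
  change (((k./2)%:Z)%:~R : R) with ((k./2)%:R : R).
  have : (0 : R) <= i%:R by []. lra.
Qed.

Lemma even_term {R : realType} (k i : nat) (l : R) : ~~ odd k -> (0 < k)%N -> (i < k.-1)%N ->
  -pi <= l < pi ->
  let a := (l - 2 * pi * ((i%:Z - ((k./2).-1)%:Z)%:~R)) / k%:R in
  -pi <= a < pi /\ exists j : int, k%:R * a = l + j%:~R * (2 * pi).
Proof.
move=> ho k0 hi hl a.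
split; last by eexists; apply: arg_cong.
have hK : (k%:R : R) = _ := k_even k ho.
have hk2 : k = (k./2 * 2)%N by rewrite -{1}(odd_double_half k) (negbTE ho) muln2.
have hl1 : (1 <= k./2)%N by lia.
have hi' : (i%:R : R) + 2 <= 2 * (k./2)%:R.
  have : (i + 2 <= 2 * k./2)%N by lia.
  by rewrite -(ler_nat R) natrD natrM.
have hL : ((k./2).-1%:R : R) = (k./2)%:R - 1.
  by rewrite -{2}(prednK hl1) -addn1 natrD addrK.
apply: arg_range => //; first by rewrite ltr0n.
- rewrite intrB; change ((i%:Z)%:~R : R) with (i%:R : R);
  change ((((k./2).-1)%:Z)%:~R : R) with (((k./2).-1)%:R : R); lra.
- rewrite intrB; change ((i%:Z)%:~R : R) with (i%:R : R);
  change ((((k./2).-1)%:Z)%:~R : R) with (((k./2).-1)%:R : R).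
  have : (0 : R) <= i%:R by []. lra.
Qed.

Lemma even_last {R : realType} (k : nat) (l : R) : ~~ odd k -> (0 < k)%N ->
  -pi <= l < pi ->
  let a := (l - 2 * pi * (k./2)%:R * Num.sg l) / k%:R in
  -pi <= a < pi /\ exists j : int, k%:R * a = l + j%:~R * (2 * pi).
Proof.
move=> ho k0 /andP[hl1 hl2] a.
have hK : (k%:R : R) = _ := k_even k ho.
have hk2 : k = (k./2 * 2)%N by rewrite -{1}(odd_double_half k) (negbTE ho) muln2.
have hl1' : (1 <= k./2)%N by lia.
have hL : (1 : R) <= (k./2)%:R by rewrite (ler_nat R 1).
have hp := pi_gt0 R.
have kp : (0 : R) < k%:R by rewrite ltr0n.
have hk0 : (k%:R : R) != 0 by rewrite gt_eqF.
rewrite /a; have [l0|l0|l0] := ltrgtP l 0.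
- rewrite ltr0_sg //; split.
    apply/andP; split; [rewrite ler_pdivlMr// | rewrite ltr_pdivrMr//]; nra.
  exists (k./2)%:Z; change (((k./2)%:Z)%:~R : R) with ((k./2)%:R : R); field; exact: hk0.
- rewrite gtr0_sg //; split.
    apply/andP; split; [rewrite ler_pdivlMr// | rewrite ltr_pdivrMr//]; nra.
  exists (- (k./2)%:Z); rewrite mulrNz; change (((k./2)%:Z)%:~R : R) with ((k./2)%:R : R); field; exact: hk0.
- rewrite l0 sgr0 mulr0 subr0 mul0r; split; first by rewrite lerNl oppr0 ltW.
  by exists 0; rewrite mulr0 mul0r addr0.
Qed.

Lemma term_le_sum {R : realType} (F : nat -> R) m n i : (m <= i < n)%N ->
  (forall j, (m <= j < n)%N -> 0 <= F j) -> F i <= \sum_(m <= j < n) F j.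
Proof.
move=> hi h; rewrite (bigD1_seq i) ?mem_index_iota ?iota_uniq //= lerDl.
rewrite big_seq_cond; apply: sumr_ge0 => j /andP[+ _]; rewrite mem_index_iota; exact: h.
Qed.


Lemma sd_le {R : realType} (f : R -> R) (k : nat) (M l : R) : (0 < k)%N -> -pi <= l < pi ->
  (forall a, -pi <= a < pi -> (exists j : int, k%:R * a = l + j%:~R * (2 * pi)) -> f a <= M) ->
  sampled_density k f l <= M.
Proof.
move=> k0 hl H; rewrite /sampled_density /=.
have kp : (0 : R) < k%:R by rewrite ltr0n.
have hk0 : (k%:R : R) != 0 by rewrite gt_eqF.
case: ifP => ho.
- apply: (@le_trans _ _ (k%:R^-1 * (M *+ (k - 0)))).
    apply: ler_wpM2l; first by rewrite invr_ge0 ltW.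
    rewrite -sumr_const_nat.
    apply: ler_sum_nat => i /andP[_ hi].
    by have [h1 h2] := odd_term _ _ _ ho hi hl; apply: H.
  by rewrite subn0 -mulr_natr; rewrite le_eqVlt; apply/orP; left; apply/eqP; field.
- apply: (@le_trans _ _ (k%:R^-1 * (M *+ (k.-1 - 0) + M))).
    apply: ler_wpM2l; first by rewrite invr_ge0 ltW.
    rewrite -sumr_const_nat; apply: lerD.
      apply: ler_sum_nat => i /andP[_ hi].
      by have [h1 h2] := even_term _ _ _ (negbT ho) k0 hi hl; apply: H.
    by have [h1 h2] := even_last _ _ (negbT ho) k0 hl; apply: H.
  have e : ((k.-1)%:R : R) = k%:R - 1 by rewrite -{2}(prednK k0) -addn1 natrD addrK.
  rewrite subn0 -[M *+ k.-1]mulr_natr e.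
  by rewrite le_eqVlt; apply/orP; left; apply/eqP; field.
Qed.

Lemma sd_ge {R : realType} (f : R -> R) (k : nat) (l a : R) : (0 < k)%N ->
  (forall x, -pi <= x < pi -> 0 <= f x) -> -pi <= l < pi -> -pi < a < pi ->
  (exists j : int, k%:R * a = l + j%:~R * (2 * pi)) ->
  f a <= k%:R * sampled_density k f l.
Proof.
move=> k0 f0 hl ha [j hj]; rewrite /sampled_density /=.
have kp : (0 : R) < k%:R by rewrite ltr0n.
have hk0 : (k%:R : R) != 0 by rewrite gt_eqF.
have hp := pi_gt0 R.
move: (hl) (ha) => /andP[hl1 hl2] /andP[ha1 ha2].
have ea : a = (l + j%:~R * (2 * pi)) / k%:R by rewrite -hj; field.
have hKa1 : k%:R * (- pi) < k%:R * a by rewrite ltr_pM2l.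
have hKa2 : k%:R * a < k%:R * pi by rewrite ltr_pM2l.
case: ifP => ho; rewrite mulrA mulfV // mul1r.
- have hK : (k%:R : R) = _ := k_odd k ho.
  set L := (k./2)%:R : R in hK.
  rewrite hK in hKa1 hKa2 hj.
  have j1 : (j < (k./2)%:Z + 1)%R.
    rewrite -(ltr_int R) intrD; change (((k./2)%:Z)%:~R : R) with L; nra.
  have j2 : (- (k./2)%:Z - 1 < j)%R.
    rewrite -(ltr_int R) intrB mulrNz; change (((k./2)%:Z)%:~R : R) with L; nra.
  have hk2 : k = (k./2 * 2).+1 by rewrite -{1}(odd_double_half k) ho muln2.
  pose i := absz ((k./2)%:Z - j).
  have ei : (i%:Z = (k./2)%:Z - j) by rewrite /i gez0_abs; lia.
  have hi : (i < k)%N by lia.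
  have -> : a = (l - 2 * pi * ((i%:Z - (k./2)%:Z)%:~R)) / k%:R.
    by rewrite ei ea; congr (_ / _); rewrite intrB intrB; ring.
  apply: (term_le_sum (fun i => f ((l - 2 * pi * ((i%:Z - (k./2)%:Z)%:~R)) / k%:R))).
    by rewrite hi.
  move=> i' /andP[_ hi']; have [h1 _] := odd_term _ _ _ ho hi' hl; exact: f0.
- have hK : (k%:R : R) = _ := k_even k (negbT ho).
  set L := (k./2)%:R : R in hK.
  rewrite hK in hKa1 hKa2 hj.
  have hk2 : k = (k./2 * 2)%N by rewrite -{1}(odd_double_half k) ho muln2.
  have j1 : (j <= (k./2)%:Z)%R.
    rewrite leNgt; apply/negP => hc.
    have : ((k./2)%:Z + 1 <= j)%R by lia.
    rewrite -(ler_int R) intrD; change (((k./2)%:Z)%:~R : R) with L; nra.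
  have j2 : (- (k./2)%:Z <= j)%R.
    rewrite leNgt; apply/negP => hc.
    have : (j <= - (k./2)%:Z - 1)%R by lia.
    rewrite -(ler_int R) intrB mulrNz; change (((k./2)%:Z)%:~R : R) with L; nra.
  have last0 : 0 <= f ((l - 2 * pi * (k./2)%:R * Num.sg l) / k%:R).
    by have [h1 _] := even_last _ _ (negbT ho) k0 hl; exact: f0.
  have sum0 : 0 <= \sum_(0 <= i < k.-1)
        f ((l - 2 * pi * ((i%:Z - ((k./2).-1)%:Z)%:~R)) / k%:R).
    rewrite big_seq_cond; apply: sumr_ge0 => i /andP[+ _]; rewrite mem_index_iota => /andP[_ hi].
    by have [h1 _] := even_term _ _ _ (negbT ho) k0 hi hl; exact: f0.
  have [ej|nej1] := eqVneq j (k./2)%:Z.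
    have l0 : l < 0.
      by move: hj; rewrite ej; change (((k./2)%:Z)%:~R : R) with L; nra.
    rewrite ltr0_sg //.
    have -> : a = (l - 2 * pi * L * -1) / k%:R.
      by rewrite ea ej; change (((k./2)%:Z)%:~R : R) with L; congr (_ / _); ring.
    by rewrite lerDr.
  have [ej|nej2] := eqVneq j (- (k./2)%:Z).
    have l0 : 0 < l.
      by move: hj; rewrite ej mulrNz; change (((k./2)%:Z)%:~R : R) with L; nra.
    rewrite gtr0_sg //.
    have -> : a = (l - 2 * pi * L * 1) / k%:R.
      by rewrite ea ej mulrNz; change (((k./2)%:Z)%:~R : R) with L; congr (_ / _); ring.
    by rewrite lerDr.
  rewrite -[f a]addr0; apply: lerD; last exact: last0.
  pose i := absz (((k./2)%:Z - 1 - j)%R).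
  have hl1' : (1 <= k./2)%N by clear -k0 hk2; lia.
  have hj3 : (0 <= (k./2)%:Z - 1 - j)%R.
    by clear -j1 nej1; move: j1 nej1; set m := (k./2)%:Z; lia.
  have ei : (i%:Z = (k./2)%:Z - 1 - j)%R by rewrite /i gez0_abs.
  have hi : (i < k.-1)%N.
    clear -ei j2 nej2 hk2; move: ei j2 nej2 hk2; move: i (k./2) => i m; lia.
  have -> : a = (l - 2 * pi * ((i%:Z - ((k./2).-1)%:Z)%:~R)) / k%:R.
    rewrite ei ea; congr (_ / _); rewrite !intrB.
    have -> : ((((k./2).-1)%:Z)%:~R : R) = L - 1.
      by change ((((k./2).-1)%:Z)%:~R : R) with (((k./2).-1)%:R : R);
         rewrite /L -{2}(prednK hl1') -addn1 natrD addrK.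
    change (((k./2)%:Z)%:~R : R) with L; ring.
  apply: (term_le_sum (fun i => f ((l - 2 * pi * ((i%:Z - ((k./2).-1)%:Z)%:~R)) / k%:R))).
    by rewrite hi.
  move=> i' /andP[_ hi']; have [h1 _] := even_term _ _ _ (negbT ho) k0 hi' hl; exact: f0.
Qed.

Definition close {R : realType} (a z e : R) :=
  exists m : int, `|a - z + m%:~R * (2 * pi)| < e.

Definition sing' {R : realType} (f : R -> R) (z : R) :=
  forall M e : R, 0 < e -> exists l : R, [/\ -pi <= l < pi, close l z e & M < f l].

Lemma close_shift {R : realType} (a z e : R) (t : int) :
  close a z e -> close a (z + t%:~R * (2 * pi)) e.
Proof.
move=> [m hm]; exists (m + t); rewrite intrD.
by have -> : a - (z + t%:~R * (2 * pi)) + (m%:~R + t%:~R) * (2 * pi) =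
  a - z + m%:~R * (2 * pi) by ring.
Qed.

Lemma sing_rep {R : realType} (f : R -> R) (z : R) : sing' f z -> singular_freq f (rep z).
Proof.
move=> hs; split; first exact: rep_range.
move=> M e e0; have [l [hl hc hM]] := hs M e e0; exists l; split => //.
have [t ht] := rep_eq z.
have -> : rep z = z + (- t)%:~R * (2 * pi) by rewrite mulrNz [in RHS]ht; ring.
exact: close_shift.
Qed.

Lemma dir1 {R : realType} (f : R -> R) (k : nat) (x : R) : (0 < k)%N ->
  (forall l : R, -pi <= l < pi -> 0 <= f l) ->
  singular_freq f x -> singular_freq (sampled_density k f) (rep (k%:R * x)).
Proof.
move=> k0 f0 [hx sx]; split; first exact: rep_range.
move=> M e e0.
have kp : (0 : R) < k%:R by rewrite ltr0n.
have hk0 : (k%:R : R) != 0 by rewrite gt_eqF.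
have e' : 0 < e / k%:R by rewrite divr_gt0.
have [l' [hl' [m hm] hM]] := sx (Num.max (k%:R * M) (f (-pi))) (e / k%:R) e'.
move: hM; rewrite gt_max => /andP[hM1 hM2].
have hl'2 : -pi < l' < pi.
  move: hl' => /andP[h1 h2]; rewrite h2 andbT lt_neqAle h1 andbT.
  by apply/eqP => ep; move: hM2; rewrite ep ltxx.
have [q hq] := rep_eq (k%:R * l'); have [p hp] := rep_eq (k%:R * x).
exists (rep (k%:R * l')); split; first exact: rep_range.
- exists (q - p + k%:Z * m); rewrite !intrD intrN intrM.
  change ((k%:Z)%:~R : R) with (k%:R : R).
  have -> : rep (k%:R * l') - rep (k%:R * x) +
      (q%:~R + - p%:~R + k%:R * m%:~R) * (2 * pi) =
      k%:R * (l' - x + m%:~R * (2 * pi)).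
    have e1 : rep (k%:R * l') = k%:R * l' - q%:~R * (2 * pi) by rewrite [in RHS]hq addrK.
    have e2 : rep (k%:R * x) = k%:R * x - p%:~R * (2 * pi) by rewrite [in RHS]hp addrK.
    rewrite e1 e2; ring.
  by rewrite normrM gtr0_norm // mulrC -ltr_pdivlMr.
- have := sd_ge f k _ _ k0 f0 (rep_range (k%:R * l')) hl'2 (ex_intro _ q hq).
  by move=> h; have := lt_le_trans hM1 h; rewrite (ltr_pM2l kp).
Qed.

Lemma unif {R : realType} (P : nat -> R -> R -> Prop) (k : nat) :
  (forall n M M' e e', P n M e -> M <= M' -> 0 < e' -> e' <= e -> P n M' e') ->
  (forall n, (n < k)%N -> exists M e, 0 < e /\ P n M e) ->
  exists M e, 0 < e /\ forall n, (n < k)%N -> P n M e.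
Proof.
move=> mono; elim: k => [|k IH] h.
  by exists 0, 1; split => // n.
have [M [e [e0 hP]]] := IH (fun n hn => h n (ltnW hn)).
have [M1 [e1 [e10 hP1]]] := h k (ltnSn k).
have hm : 0 < Num.min e e1 by rewrite lt_min e0 e10.
exists (Num.max M M1), (Num.min e e1); split => // n.
rewrite ltnS leq_eqVlt => /orP[/eqP->|hn].
  by apply: (mono _ _ _ _ _ hP1); rewrite // ?le_max ?ge_min lexx orbT.
by apply: (mono _ _ _ _ _ (hP n hn)); rewrite // ?le_max ?ge_min lexx.
Qed.

Lemma dir2 {R : realType} (f : R -> R) (k : nat) (y : R) : (0 < k)%N ->
  singular_freq (sampled_density k f) y -> exists x, singular_freq f x /\ rep (k%:R * x) = y.
Proof.
move=> k0 [hy sy].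
have kp : (0 : R) < k%:R by rewrite ltr0n.
have hk0 : (k%:R : R) != 0 by rewrite gt_eqF.
pose z := fun n : int => (y + n%:~R * (2 * pi)) / k%:R.
case: (pselect (exists n : int, sing' f (z n))) => [[n hn]|hn].
  exists (rep (z n)); split; first exact: sing_rep.
  have [t ht] := rep_eq (z n).
  apply: (@rep_uniq _ y _ (n - k%:Z * t)) => //.
  rewrite intrB intrM; change ((k%:Z)%:~R : R) with (k%:R : R).
  have e1 : rep (z n) = z n - t%:~R * (2 * pi) by rewrite [in RHS]ht addrK.
  by rewrite e1 /z; field.
exfalso.
have hb : forall n : int, exists M e, 0 < e /\
    forall l, -pi <= l < pi -> close l (z n) e -> f l <= M.
  move=> n; apply: contrapT => hnb; apply: hn; exists n => M e e0.
  apply: contrapT => hnl; apply: hnb; exists M, e; split => // l hl hc.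
  by rewrite leNgt; apply/negP => hlt; apply: hnl; exists l; split.
pose P := fun (n : nat) (M e : R) =>
  forall l, -pi <= l < pi -> close l (z n%:Z) e -> f l <= M.
have mono : forall n M M' e e', P n M e -> M <= M' -> 0 < e' -> e' <= e -> P n M' e'.
  move=> n M M' e e' hP hM _ he l hl [m hm].
  apply: le_trans hM; apply: hP => //; exists m; exact: lt_le_trans hm he.
have [M [e [e0 hU]]] := unif P k mono (fun n _ => hb n).
have hall : forall n : int, forall l, -pi <= l < pi -> close l (z n) e -> f l <= M.
  move=> n l hl hc.
  have hkz : (k%:Z != 0) by rewrite eqz_nat -lt0n.
  have r0 : (0 <= (n %% k%:Z)%Z)%R by apply: modz_ge0.
  have rk : ((n %% k%:Z)%Z < k%:Z)%R by apply: ltz_pmod; rewrite ltz_nat.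
  have er : ((absz (n %% k%:Z)%Z)%:Z = (n %% k%:Z)%Z) by rewrite gez0_abs.
  apply: (hU (absz (n %% k%:Z)%Z) _ l hl); first by rewrite -ltz_nat er.
  rewrite er.
  have -> : z (n %% k%:Z)%Z = z n + (- (n %/ k%:Z)%Z)%:~R * (2 * pi).
    have hn' : (n%:~R : R) = (n %/ k%:Z)%Z%:~R * k%:R + (n %% k%:Z)%Z%:~R.
      by rewrite {1}(divz_eq n k%:Z) intrD intrM.
    by rewrite /z hn' mulrNz; field.
  exact: close_shift.
have [l [hl [m hm] hMl]] := sy M (k%:R * e) (mulr_gt0 kp e0).
have : sampled_density k f l <= M.
  apply: sd_le => // a ha [j hj]; apply: (hall (j - m)) => //.
  exists 0; rewrite mul0r addr0.
  have ea : a = (l + j%:~R * (2 * pi)) / k%:R by rewrite -hj; field.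
  have -> : a - z (j - m) = (l - y + m%:~R * (2 * pi)) / k%:R.
    by rewrite /z intrB ea; field.
  by rewrite normrM normfV (gtr0_norm kp) ltr_pdivrMr // [e * _]mulrC.
by rewrite leNgt hMl.
Qed.

Theorem proposition4p2 (R : realType) (fX : R -> R) (k : nat) :
  (forall l : R, -pi <= l < pi -> 0 <= fX l) ->
  (lebesgue_measure : set R -> \bar R).-integrable `[-pi, pi[ (EFin \o fX) ->
  finite_set (singular_set fX) ->
  (1 <= nb_singular fX)%N ->
  (1 <= k)%N ->
  let fY := sampled_density k fX in
  [/\ finite_set (singular_set fY),
      (1 <= nb_singular fY <= nb_singular fX)%N &
      ((nb_singular fY < nb_singular fX)%N <->
       exists l0 l1 : R, [/\ singular_freq fX l0, singular_freq fX l1, l0 != l1 &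
         exists j : int, l0 - l1 = 2 * pi * j%:~R / k%:R])].
Proof.
move=> f0 _ finX nX k0 fY.
have kp : (0 : R) < k%:R by rewrite ltr0n.
have hk0 : (k%:R : R) != 0 by rewrite gt_eqF.
pose phi := fun x : R => rep (k%:R * x).
have eqS : singular_set fY = phi @` singular_set fX.
  apply/seteqP; split => [y /= hy|y [x hx <-]].
    by have [x [hx <-]] := dir2 fX k y k0 hy; exists x.
  exact: dir1 fX k x k0 f0 hx.
have finY : finite_set (singular_set fY) by rewrite eqS; exact: finite_image.
have eqN : nb_singular fY = #|` (phi @` fset_set (singular_set fX))%fset|%fset.
  by rewrite /nb_singular eqS fset_set_image.
have memA : forall x, x \in fset_set (singular_set fX) <-> singular_freq fX x.
  by move=> x; rewrite in_fset_set // inE.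
have phiE : forall x0 x1, phi x0 = phi x1 <-> exists j : int, x0 - x1 = 2 * pi * j%:~R / k%:R.
  move=> x0 x1; have [t0 ht0] := rep_eq (k%:R * x0); have [t1 ht1] := rep_eq (k%:R * x1).
  split => [he|[j hj]].
    rewrite /phi in he; set r0 := rep (k%:R * x0) in ht0 he; set r1 := rep (k%:R * x1) in ht1 he.
    exists (t0 - t1); apply: (mulfI hk0); rewrite mulrBr ht0 ht1 he intrB.
    by field.
  rewrite /phi; apply: (@rep_uniq _ (rep (k%:R * x1)) _ (t1 + j)); first exact: rep_range.
  set r1 := rep (k%:R * x1) in ht1 *.
  have ex0 : x0 = x1 + 2 * pi * j%:~R / k%:R by rewrite -hj; ring.
  by rewrite ex0 mulrDr ht1 intrD; field.
rewrite /nb_singular in nX *; rewrite -/(nb_singular fY) eqN; split => //.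
- apply/andP; split.
    have : fset_set (singular_set fX) != fset0 by rewrite -cardfs_gt0.
    move/fset0Pn => [x hx]; rewrite cardfs_gt0; apply/fset0Pn; exists (phi x).
    exact: in_imfset.
  exact: leq_imfset_card.
split.
  move=> hlt.
  have ninj : ~ {in fset_set (singular_set fX) &, injective phi}.
    by move/card_in_imfsetP => /eqP h; rewrite h ltnn in hlt.
  apply: contrapT => hne; apply: ninj => x0 x1 h0 h1 he.
  apply: contrapT => hneq; apply: hne; exists x0, x1; split.
  - by apply/memA.
  - by apply/memA.
  - by apply/eqP.
  - by apply/phiE.
move=> [x0 [x1 [h0 h1 hne hj]]].
rewrite ltn_neqAle leq_imfset_card andbT; apply/negP => /card_in_imfsetP hinj.
move/eqP: hne; apply; apply: hinj.
- by apply/memA.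
- by apply/memA.
- by apply/phiE.
Qed.
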